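(* For every $\lambda = ma+nb \in \Lambda^{2,2}_{+}$ (with $m,n\in\mathbb{N}$), the Frobenius complex $\mathcal{F}(\lambda;\Lambda^{2,2})$ is homotopy equivalent to the sphere $S^{m+n-2}$ (where $S^{-1}$ is the empty space).
   Context: $\mathbb{N}=\{0,1,2,\dots\}$. For an additive commutative monoid $\Lambda$ that is cancellative and has no non-trivial invertible elements, define the partial order $\lambda \le \mu$ iff there is $\nu\in\Lambda$ with $\lambda+\nu=\mu$; $\lambda<\mu$ means $\lambda\le\mu$ and $\lambda\neq\mu$. Let $\Lambda_+=\Lambda\setminus\{0\}$. For a poset $P$, $|P|$ denotes the geometric realization of its order complex, and $(x,y)_P=\{z\in P: x<z<y\}$. The Frobenius complex is $\mathcal{F}(\lambda;\Lambda)=|(0,\lambda)_\Lambda|$ for $\lambda\in\Lambda_+$. $\Lambda^{2,2}=\langle a,b\mid 2a=2b\rangle$ is the quotient of the free commutative monoid $\mathbb{N}a\oplus\mathbb{N}b$ by the congruence generated by $\lambda+2a\sim\lambda+2b$ ($\lambda\in\mathbb{N}a\oplus\mathbb{N}b$). *)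

(* Defs.v *)
From HB Require Import structures.
From Stdlib Require Import Relation_Operators.
From mathcomp Require Import all_boot all_order all_algebra generic_quotient.
From mathcomp Require Import all_classical all_reals all_analysis.
Set Implicit Arguments. Unset Strict Implicit. Unset Printing Implicit Defensive.
Import Order.TTheory GRing.Theory Num.Theory.
Import numFieldNormedType.Exports.
Local Open Scope classical_set_scope.
Local Open Scope ring_scope.
Local Open Scope quotient_scope.

(* Elements of the free commutative monoid N a (+) N b are pairs (m, n) = m a + n b. *)
Definition addp (x y : nat * nat) : nat * nat := ((x.1 + y.1)%N, (x.2 + y.2)%N).

Inductive gen22 : nat * nat -> nat * nat -> Prop :=
  | gen22_step (l : nat * nat) : gen22 (addp l (2%N, 0%N)) (addp l (0%N, 2%N)).

(* the congruence generated: the generating relation is translation invariant,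
   so its reflexive-symmetric-transitive closure is the generated congruence *)
Definition cong22 : nat * nat -> nat * nat -> Prop :=
  clos_refl_sym_trans (nat * nat) gen22.

Definition cong22b (x y : nat * nat) : bool := `[< cong22 x y >].

Lemma cong22b_refl : reflexive cong22b.
Proof. by move=> x; apply/asboolP; apply: rst_refl. Qed.
Lemma cong22b_sym : symmetric cong22b.
Proof.
by move=> x y; apply/asboolP/asboolP => H; apply: rst_sym.
Qed.
Lemma cong22b_trans : transitive cong22b.
Proof.
move=> y x z /asboolP Hxy /asboolP Hyz; apply/asboolP.
exact: rst_trans Hxy Hyz.
Qed.

Definition cong22_rel := EquivRel cong22b cong22b_refl cong22b_sym cong22b_trans.

Definition L22 := {eq_quot cong22_rel}.


Definition mkL (m n : nat) : L22 := \pi_L22 (m, n).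
Definition L0 : L22 := mkL 0 0.
Definition addL (x y : L22) : L22 := \pi_L22 (addp (repr x) (repr y)).

Definition leL (x y : L22) : Prop := exists nu, addL x nu = y.
Definition ltL (x y : L22) : Prop := leL x y /\ x <> y.

(* A point of |P| is a function t : V -> R, nonnegative, whose support is a
   finite chain of P, with total weight 1 (barycentric coordinates).  The
   space carries the (subspace of the) product topology on V -> R; for a
   finite poset, as here, this is the topology of the geometric realization. *)
Definition order_complex_realization (R : realType) (V : eqType)
  (le : V -> V -> Prop) (P : set V) : set {ptws V -> R} :=
  [set t : {ptws V -> R} |
    (forall v, 0 <= t v) /\
    exists s : seq V, [/\ uniq s,
      (forall v, t v != 0 <-> v \in s),
      (forall v, v \in s -> P v),
      (forall v w, v \in s -> w \in s -> le v w \/ le w v) &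
      \sum_(v <- s) t v = 1]].

Definition open_intervalL (x y : L22) : set L22 := [set z | ltL x z /\ ltL z y].

Definition frobenius_complex22 (R : realType) (lam : L22) : set {ptws L22 -> R} :=
  @order_complex_realization R _ leL (open_intervalL L0 lam).

(* unit sphere in R^d, i.e. S^(d-1); for d = 0 it is empty (= S^-1) *)
Definition unit_sphere (R : realType) (d : nat) : set 'rV[R]_d :=
  [set x | \sum_(i < d) (x ord0 i) ^+ 2 = 1].

Definition homotopic_in (R : realType) (X : topologicalType) (A : set X)
  (h k : X -> X) : Prop :=
  exists H : (R * X)%type -> X,
    [/\ {within `[0%R, 1%R] `*` A, continuous H},
        H @` (`[0%R, 1%R] `*` A) `<=` A &
        forall x, A x -> H (0%R, x) = h x /\ H (1%R, x) = k x].

Definition homotopy_equivalent (R : realType) (X Y : topologicalType)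
  (A : set X) (B : set Y) : Prop :=
  exists (f : X -> Y) (g : Y -> X),
    [/\ {within A, continuous f}, f @` A `<=` B,
        {within B, continuous g}, g @` B `<=` A &
      ( 
        @homotopic_in R X A (g \o f) idfun /\
        @homotopic_in R Y B (f \o g) idfun)].

(* Main.v *)
Require Import Defs.
From Stdlib Require Import Relation_Operators.
From mathcomp Require Import all_boot all_order all_algebra generic_quotient.
From mathcomp Require Import all_classical all_reals all_analysis.
From mathcomp Require Import zify ring lra.
Import numFieldNormedType.Exports.
Set Implicit Arguments. Unset Strict Implicit. Unset Printing Implicit Defensive.
Import Order.TTheory GRing.Theory Num.Theory.
Local Open Scope classical_set_scope.
Local Open Scope quotient_scope.

Definition inv22 (p : nat * nat) : nat * bool := ((p.1 + p.2)%N, odd p.2).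

Lemma cong22_inv p q : cong22 p q -> inv22 p = inv22 q.
Proof.
elim=> {p q} [p q [l]|p|p q _ ->|p q r _ -> _ ->] //.
rewrite /inv22 /addp /=; congr pair; first lia.
by rewrite !oddD.
Qed.

Definition nfi (i : nat * bool) : nat * nat :=
  if i.2 then (i.1.-1, 1%N) else (i.1, 0%N).

Lemma cong22_step m n : cong22 (m, n.+2) (m.+2, n).
Proof.
apply: rst_sym; apply: rst_step.
have := gen22_step (m, n); rewrite /addp /= !addn2 addn0 /=; by rewrite addn0.
Qed.

Lemma cong22_nf p : cong22 p (nfi (inv22 p)).
Proof.
case: p => m n; elim/ltn_ind: n m => n IH m.
case: n IH => [|[|n]] IH.
- by rewrite /nfi /inv22 /= addn0; apply: rst_refl.
- by rewrite /nfi /inv22 /= addn1; apply: rst_refl.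
apply: rst_trans (cong22_step m n) _.
have -> : inv22 (m, n.+2) = inv22 (m.+2, n).
  rewrite /inv22 /=; congr pair; lia.
exact: IH.
Qed.

Lemma cong22P p q : cong22 p q <-> inv22 p = inv22 q.
Proof.
split; first exact: cong22_inv.
move=> e; apply: rst_trans (cong22_nf p) _; rewrite e.
apply: rst_sym; exact: cong22_nf.
Qed.

Definition invL (x : L22) := inv22 (repr x).

Lemma invL_pi p : invL (\pi_L22 p) = inv22 p.
Proof.
rewrite /invL; apply/cong22P.
have : \pi_L22 (repr (\pi_L22 p)) = \pi_L22 p by rewrite reprK.
by move/eqmodP => /asboolP.
Qed.

Lemma invL_inj x y : invL x = invL y -> x = y.
Proof.
move=> e; rewrite -[x]reprK -[y]reprK; apply/eqmodP; apply/asboolP.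
exact/cong22P.
Qed.

Definition deg (x : L22) := (invL x).1.
Definition par (x : L22) := (invL x).2.

Lemma L22_eq x y : deg x = deg y -> par x = par y -> x = y.
Proof.
move=> h1 h2; apply: invL_inj; rewrite /deg /par in h1 h2.
by case: (invL x) (invL y) h1 h2 => [? ?] [? ?] /= -> ->.
Qed.

Lemma deg_add x y : deg (addL x y) = (deg x + deg y)%N.
Proof. rewrite /deg /addL invL_pi /invL. rewrite /inv22 /addp /=; lia. Qed.
Lemma par_add x y : par (addL x y) = par x (+) par y.
Proof. by rewrite /par /addL invL_pi /invL /= oddD. Qed.

Lemma deg_mkL m n : deg (mkL m n) = (m + n)%N.
Proof. by rewrite /deg /mkL invL_pi. Qed.
Lemma par_mkL m n : par (mkL m n) = odd n.
Proof. by rewrite /par /mkL invL_pi. Qed.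

Lemma leLP x y : leL x y <-> (deg x < deg y)%N \/ x = y.
Proof.
split.
  case=> nu <-; rewrite deg_add.
  case: (posnP (deg nu)) => h; last by left; lia.
  right; apply: L22_eq; first by rewrite deg_add h addn0.
  rewrite par_add; suff -> : par nu = false by rewrite addbF.
  move: h; rewrite /deg /par /invL /inv22 /=.
  by case: (repr nu) => a [|b] /=; [|lia].
case=> [h|->]; last first.
  exists L0; apply: L22_eq; first by rewrite /L0 deg_add deg_mkL !addn0.
  by rewrite /L0 par_add par_mkL addbF.
pose b := par x != par y.
exists (mkL (deg y - deg x - b) b); apply: L22_eq.
  rewrite deg_add deg_mkL; rewrite /b; case: (_ != _); lia.
rewrite par_add par_mkL /b.
by case: (par x); case: (par y).
Qed.

Lemma ltLP x y : ltL x y <-> (deg x < deg y)%N.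
Proof.
split.
  case=> /leLP [//|->]; by [].
move=> h; split; first by apply/leLP; left.
by move=> e; move: h; rewrite e ltnn.
Qed.

Definition node (j : nat) (b : bool) : L22 := \pi_L22 ((j.+1 - b)%N, nat_of_bool b).

Lemma deg_node j b : deg (node j b) = j.+1.
Proof. by rewrite /deg /node invL_pi /=; case: b => /=; lia. Qed.
Lemma par_node j b : par (node j b) = b.
Proof. by rewrite /par /node invL_pi /=; case: b. Qed.

Lemma node_of z : (0 < deg z)%N -> z = node (deg z).-1 (par z).
Proof.
move=> h; apply: L22_eq; rewrite ?deg_node ?par_node //; lia.
Qed.

Lemma node_inj j b j' b' : node j b = node j' b' -> j = j' /\ b = b'.
Proof.
move=> e; split; first by have := deg_node j b; rewrite e deg_node => -[].
by have := par_node j b; rewrite e par_node.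
Qed.

Local Open Scope ring_scope.

Section Nodes.
Variable d : nat.

Definition Nl : seq L22 :=
  [seq node j false | j : 'I_d <- index_enum 'I_d] ++ [seq node j true | j : 'I_d <- index_enum 'I_d].

Lemma sumNl (R : realType) (F : L22 -> R) :
  \sum_(v <- Nl) F v = \sum_(j < d) (F (node j false) + F (node j true)).
Proof. by rewrite big_cat !big_map big_split. Qed.

Lemma node_in (j : 'I_d) b : node j b \in Nl.
Proof.
rewrite mem_cat; case: b; apply/orP; [right|left];
  by apply/mapP; exists j; rewrite ?mem_index_enum.
Qed.

Lemma memNl v : v \in Nl -> exists (j : 'I_d) b, v = node j b.
Proof.
rewrite mem_cat => /orP[] /mapP [j _ ->]; by exists j; eexists.
Qed.

Lemma uniq_Nl : uniq Nl.
Proof.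
rewrite cat_uniq !map_inj_uniq ?index_enum_uniq //=; last first.
- by move=> i j /node_inj [/val_inj].
- by move=> i j /node_inj [/val_inj].
rewrite andbT; apply/hasPn => v /mapP [j _ ->]; apply/mapP => -[i _ /node_inj [_ //]].
Qed.

End Nodes.

Section Complex.
Variables (R : realType) (m n : nat).
Local Notation d := (m + n).-1.
Local Notation lam := (mkL m n).

Lemma deg_L0 : deg L0 = 0%N.
Proof. by rewrite /L0 deg_mkL. Qed.

Lemma inP_node v : open_intervalL L0 lam v -> v \in Nl d.
Proof.
case=> /ltLP h1 /ltLP h2; rewrite deg_L0 in h1; rewrite deg_mkL in h2.
rewrite (node_of h1); have Hj : ((deg v).-1 < d)%N by lia.
exact: (node_in (Ordinal Hj)).
Qed.

Lemma node_inP (j : 'I_d) b : open_intervalL L0 lam (node j b).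
Proof.
split; apply/ltLP; rewrite deg_node ?deg_L0 ?deg_mkL //.
by have := ltn_ord j; lia.
Qed.

Variable t : {ptws L22 -> R}.
Hypothesis tA : @frobenius_complex22 R lam t.

Lemma A_ge0 v : 0 <= t v.
Proof. by case: tA. Qed.

Lemma A_supp v : t v != 0 -> v \in Nl d.
Proof.
case: tA => _ [s [_ supp inP _ _]] /supp /inP; exact: inP_node.
Qed.

Lemma A_zero v : v \notin Nl d -> t v = 0.
Proof. by move=> h; apply/eqP; apply: contraNT h; exact: A_supp. Qed.

Lemma A_excl (j : 'I_d) : t (node j false) = 0 \/ t (node j true) = 0.
Proof.
case: tA => _ [s [_ supp _ ch _]].
case: (eqVneq (t (node j false)) 0) => h1; first by left.
case: (eqVneq (t (node j true)) 0) => h2; first by right.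
exfalso; move/supp: h1 => h1; move/supp: h2 => h2.
by case: (ch _ _ h1 h2) => /leLP; rewrite !deg_node ltnn => -[//|/node_inj []].
Qed.

Lemma A_sum : \sum_(v <- Nl d) t v = 1.
Proof.
case: tA => _ [s [us supp inP _ <-]].
have sub : {subset s <= Nl d} by move=> v /inP; exact: inP_node.
have pe : perm_eq (Nl d) (s ++ [seq v <- Nl d | v \notin s]).
  apply: uniq_perm; first exact: uniq_Nl.
    rewrite cat_uniq us filter_uniq ?uniq_Nl //= andbT.
    by apply/hasPn => v; rewrite mem_filter => /andP[].
  move=> v; rewrite mem_cat mem_filter.
  by case: (boolP (v \in s)) => [/sub -> //|_ /=]. 
rewrite (perm_big _ pe) big_cat /= [X in _ + X]big1_seq ?addr0 //.
move=> v /andP[_]; rewrite mem_filter => /andP[h _].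
by apply/eqP; apply: contraNT h => /supp.
Qed.

End Complex.

Section Cont.
Variable R : realType.

Lemma ptws_cont_at (Y : topologicalType) (V : Type) (h : Y -> {ptws V -> R}) y :
  (forall v, {for y, continuous (fun z => h z v)}) -> {for y, continuous h}.
Proof.
move=> hc; apply/cvg_sup => v A /=.
rewrite nbhsE /= => -[B [Bop By] sBA].
case: Bop => C Cop CB.
have : nbhs (h y v) C.
  apply: open_nbhs_nbhs; split => //.
  by move: By; rewrite -CB.
move=> /hc; rewrite nbhs_simpl /= => hC.
move: hC; rewrite nbhsE => -[D Dy sD]; exists D => // z /sD Cz; apply: sBA; rewrite -CB; exact: Cz.
Qed.

Lemma mx_cont_at (X : topologicalType) p q (h : X -> 'M[R]_(p, q)) x :
  (forall i j, {for x, continuous (fun z => h z i j)}) -> {for x, continuous h}.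
Proof.
move=> hc A /= [P Pn sPA].
apply: (filterS (fun z hz => sPA (h z) hz)).
apply: filter_forall => i; apply: filter_forall => j.
exact: hc i j (P i j) (Pn i j).
Qed.

Lemma cont_sum (T : topologicalType) (I : Type) (r : seq I) (P : pred I)
  (f : I -> T -> R) x :
  (forall i, {for x, continuous (f i)}) ->
  {for x, continuous (fun z => \sum_(i <- r | P i) f i z)}.
Proof.
move=> fc.
apply: (@cvg_big _ _ +%R 0 P add_continuous) => // i _; exact: fc.
Qed.

Lemma proj_cont (V : eqType) (v : V) (t : {ptws V -> R}) :
  {for t, continuous (fun s : {ptws V -> R} => s v)}.
Proof. exact: (@proj_continuous V (fun _ => R) v). Qed.

End Cont.

Section PosNeg.
Variable R : realType.
Implicit Types a c p q : R.

Definition pos a := (a + `|a|) / 2.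
Definition neg a := (`|a| - a) / 2.

Lemma pos_ge0 a : 0 <= pos a.
Proof. rewrite /pos; case: (lerP 0 a) => h; [rewrite ger0_norm|rewrite ltr0_norm]; lra. Qed.
Lemma neg_ge0 a : 0 <= neg a.
Proof. rewrite /neg; case: (lerP 0 a) => h; [rewrite ger0_norm|rewrite ltr0_norm]; lra. Qed.
Lemma pos_add_neg a : pos a + neg a = `|a|.
Proof. rewrite /pos /neg; lra. Qed.
Lemma pos_sub_neg a : pos a - neg a = a.
Proof. rewrite /pos /neg; lra. Qed.
Lemma pos_neg_excl a : pos a = 0 \/ neg a = 0.
Proof.
rewrite /pos /neg; case: (lerP 0 a) => h; [rewrite ger0_norm|rewrite ltr0_norm] => //;
  [right|left]; lra.
Qed.
Lemma posZ c a : 0 <= c -> pos (c * a) = c * pos a.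
Proof. by move=> hc; rewrite /pos normrM ger0_norm //; ring. Qed.
Lemma negZ c a : 0 <= c -> neg (c * a) = c * neg a.
Proof. by move=> hc; rewrite /neg normrM ger0_norm //; ring. Qed.
Lemma pos_diff p q : 0 <= p -> 0 <= q -> (p = 0 \/ q = 0) ->
  pos (p - q) = p /\ neg (p - q) = q.
Proof.
move=> hp hq [->|->]; rewrite /pos /neg ?sub0r ?subr0 ?normrN ger0_norm //; split; lra.
Qed.

End PosNeg.

Section Main.
Variables (R : realType) (m n : nat).
Local Notation d := (m + n).-1.
Local Notation lam := (mkL m n).

Definition ssq (y : 'rV[R]_d) := \sum_(j < d) (y ord0 j) ^+ 2.
Definition l1 (y : 'rV[R]_d) := \sum_(j < d) `|y ord0 j|.
Definition uvec (t : {ptws L22 -> R}) : 'rV[R]_d :=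
  \row_(j < d) (t (node j false) - t (node j true)).
Definition Fm (t : {ptws L22 -> R}) : 'rV[R]_d :=
  (Num.sqrt (ssq (uvec t)))^-1 *: uvec t.
Definition Gm (y : 'rV[R]_d) : {ptws L22 -> R} := fun v =>
  (\sum_(j < d) ((v == node j false)%:R * pos (y ord0 j)
                 + (v == node j true)%:R * neg (y ord0 j))) / l1 y.

Lemma Gm_node y (j : 'I_d) b :
  Gm y (node j b) = (if b then neg (y ord0 j) else pos (y ord0 j)) / l1 y.
Proof.
rewrite /Gm (bigD1 j) //= big1 ?addr0.
  by case: b; rewrite !eqxx; case: eqP => [/node_inj[]//|_]; rewrite /= ?mul0r ?mul1r ?add0r ?addr0.
move=> i ij; have hne : forall c, (node j b == node i c) = false.
  by move=> c; apply/eqP => /node_inj [/val_inj/eqP]; rewrite eq_sym (negbTE ij).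
by rewrite !hne !mul0r addr0.
Qed.

Lemma Gm_out y v : v \notin Nl d -> Gm y v = 0.
Proof.
move=> h; rewrite /Gm big1 ?mul0r // => j _.
have hne : forall c, (v == node j c) = false.
  by move=> c; apply/eqP => e; move: h; rewrite e node_in.
by rewrite !hne !mul0r addr0.
Qed.

Lemma ssqZ c y : ssq (c *: y) = c ^+ 2 * ssq y.
Proof. by rewrite /ssq mulr_sumr; apply: eq_bigr => j _; rewrite mxE exprMn. Qed.
Lemma l1Z c y : l1 (c *: y) = `|c| * l1 y.
Proof. by rewrite /l1 mulr_sumr; apply: eq_bigr => j _; rewrite mxE normrM. Qed.

Lemma l1_ge0 y : 0 <= l1 y.
Proof. by apply: sumr_ge0 => j _. Qed.
Lemma ssq_ge0 y : 0 <= ssq y.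
Proof. by apply: sumr_ge0 => j _; exact: sqr_ge0. Qed.

Lemma l1_gt0 y : ssq y != 0 -> 0 < l1 y.
Proof.
move=> h; rewrite lt0r l1_ge0 andbT; apply: contra h => /eqP e.
have h0 := psumr_eq0P (fun j _ => normr_ge0 (y ord0 j)) e.
by apply/eqP; rewrite /ssq big1 // => j _; have /eqP := h0 j isT; rewrite normr_eq0 => /eqP ->; rewrite expr0n.
Qed.

Lemma ssq_gt0 y : l1 y != 0 -> 0 < ssq y.
Proof.
move=> h; rewrite lt0r ssq_ge0 andbT; apply: contra h => /eqP e.
have h0 := psumr_eq0P (fun j _ => sqr_ge0 (y ord0 j)) e.
by apply/eqP; rewrite /l1 big1 // => j _; have /eqP := h0 j isT; rewrite sqrf_eq0 => /eqP ->; rewrite normr0.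
Qed.


Lemma G_in (y : 'rV[R]_d) : unit_sphere y -> @frobenius_complex22 R lam (Gm y).
Proof.
rewrite /unit_sphere /= => hy.
have hy' : ssq y = 1 by [].
have L0 : 0 < l1 y by apply: l1_gt0; rewrite hy' oner_neq0.
split.
  move=> v; rewrite /Gm divr_ge0 ?(ltW L0) //; apply: sumr_ge0 => j _.
  by rewrite addr_ge0 // mulr_ge0 ?ler0n ?pos_ge0 ?neg_ge0.
exists [seq v <- Nl d | Gm y v != 0]; split.
- by rewrite filter_uniq // uniq_Nl.
- move=> v; rewrite mem_filter; split; first last.
    by case/andP.
  move=> h; rewrite h /=; apply: contraNT h => h; rewrite Gm_out //.
- move=> v; rewrite mem_filter => /andP [_ /memNl [j [b ->]]]; exact: node_inP.
- move=> v w; rewrite !mem_filter => /andP [hv /memNl [j [b ev]]] /andP [hw /memNl [i [c ew]]].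
  rewrite ev ew in hv hw *; clear ev ew.
  case: (ltngtP j i) => hji.
  + by left; apply/leLP; left; rewrite !deg_node.
  + by right; apply/leLP; left; rewrite !deg_node.
  + have eji : j = i by apply: val_inj.
    rewrite -eji in hw *.
    case: (eqVneq b c) => [->|bc]; first by left; apply/leLP; right.
    exfalso; move: hv hw; rewrite !Gm_node.
    have : pos (y ord0 j) = 0 \/ neg (y ord0 j) = 0 by apply: pos_neg_excl.
    by move: bc; case: b; case: c => // _ [->|->]; rewrite mul0r eqxx.
- rewrite big_filter big_mkcond /=.
  rewrite (eq_bigr (fun v => Gm y v)); last by move=> v _; case: eqP.
  rewrite sumNl.
  under eq_bigr do rewrite !Gm_node -mulrDl pos_add_neg.
  by rewrite -mulr_suml divff // gt_eqF.
Qed.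


Lemma l1_uvec t : @frobenius_complex22 R lam t -> l1 (uvec t) = 1.
Proof.
move=> tA; rewrite -(A_sum tA) sumNl /l1; apply: eq_bigr => j _; rewrite mxE.
have [-> | ->] := A_excl tA j; rewrite ?sub0r ?subr0 ?normrN ger0_norm ?(A_ge0 tA) ?add0r ?addr0 //.
Qed.

Lemma F_in t : @frobenius_complex22 R lam t -> unit_sphere (Fm t).
Proof.
move=> tA; rewrite /unit_sphere /=.
change (ssq (Fm t) = 1).
have S0 : 0 < ssq (uvec t) by apply: ssq_gt0; rewrite l1_uvec // oner_neq0.
rewrite /Fm ssqZ exprVn sqr_sqrtr ?(ltW S0) // mulVf // gt_eqF //.
Qed.

Lemma GF t : @frobenius_complex22 R lam t -> Gm (Fm t) = t.
Proof.
move=> tA; apply/funext => v.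
have S0 : 0 < ssq (uvec t) by apply: ssq_gt0; rewrite l1_uvec // oner_neq0.
set c := (Num.sqrt (ssq (uvec t)))^-1.
have c0 : 0 < c by rewrite invr_gt0 sqrtr_gt0.
have l1F : l1 (Fm t) = c by rewrite /Fm l1Z l1_uvec // mulr1 gtr0_norm.
case: (boolP (v \in Nl d)) => h; last by rewrite Gm_out // (A_zero tA).
case/memNl: h => j [b ->].
rewrite Gm_node l1F /Fm mxE [uvec t _ _]mxE.
have [p1 p2] := pos_diff (A_ge0 tA (node j false)) (A_ge0 tA (node j true)) (A_excl tA j).
case: b; rewrite ?negZ ?posZ ?(ltW c0) // ?p1 ?p2 mulrC mulKf // gt_eqF //.
Qed.

Lemma FG y : unit_sphere y -> Fm (Gm y) = y.
Proof.
rewrite /unit_sphere /= => hy.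
have hy' : ssq y = 1 by [].
have L0 : 0 < l1 y by apply: l1_gt0; rewrite hy' oner_neq0.
rewrite /Fm; have -> : uvec (Gm y) = (l1 y)^-1 *: y.
  by apply/rowP => j; rewrite !mxE !Gm_node -mulrBl pos_sub_neg mulrC.
rewrite ssqZ hy' mulr1 sqrtr_sqr gtr0_norm ?invr_gt0 //.
by rewrite scalerA mulVf ?scale1r // invr_eq0 gt_eqF.
Qed.


Lemma pos_cont (x : R) : {for x, continuous (@pos R)}.
Proof.
apply: continuousM; last exact: cvg_cst.
apply: continuousD; first exact: cvg_id.
exact: norm_continuous.
Qed.

Lemma neg_cont (x : R) : {for x, continuous (@neg R)}.
Proof.
apply: continuousM; last exact: cvg_cst.
apply: continuousB; last exact: cvg_id.
exact: norm_continuous.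
Qed.

Lemma uvec_cont t : {for t, continuous uvec}.
Proof.
apply: mx_cont_at => i j.
have -> : (fun z => uvec z i j) = (fun z => z (node j false) - z (node j true)).
  by apply/funext => z; rewrite mxE.
by apply: continuousB; apply: proj_cont.
Qed.

Lemma F_cont t : ssq (uvec t) != 0 -> {for t, continuous Fm}.
Proof.
move=> S0.
have S0' : 0 < ssq (uvec t) by rewrite lt0r S0 ssq_ge0.
apply: continuousZ; last exact: uvec_cont.
apply: continuousV; first by rewrite sqrtr_eq0 -ltNge.
apply: (continuous_comp _ (@sqrt_continuous R _)).
apply: cont_sum => j.
apply: (@continuous_comp _ _ _ (fun z => uvec z ord0 j) (fun a : R => a ^+ 2)).
  exact: (continuous_comp (f:=uvec) (g:=fun M : 'rV[R]_d => M ord0 j) (@uvec_cont t) (@coord_continuous R 1 d ord0 j (uvec t))).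
exact: (@exprn_continuous R 2).
Qed.

Lemma G_cont y : l1 y != 0 -> {for y, continuous Gm}.
Proof.
move=> L0; apply: ptws_cont_at => v.
apply: continuousM.
  apply: cont_sum => j; apply: continuousD; apply: continuousM.
  - exact: cst_continuous.
  - exact: (continuous_comp (f:=fun M : 'rV[R]_d => M ord0 j) (g:=@pos R) (@coord_continuous R 1 d ord0 j y) (@pos_cont (y ord0 j))).
  - exact: cst_continuous.
  - exact: (continuous_comp (f:=fun M : 'rV[R]_d => M ord0 j) (g:=@neg R) (@coord_continuous R 1 d ord0 j y) (@neg_cont (y ord0 j))).
apply: continuousV => //.
apply: cont_sum => j.
exact: (continuous_comp (f:=fun M : 'rV[R]_d => M ord0 j) (g:=Num.norm) (@coord_continuous R 1 d ord0 j y) (@norm_continuous _ R^o (y ord0 j))).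
Qed.

End Main.


Local Close Scope ring_scope.
Unset Implicit Arguments.

Theorem theorem2p8 (R : realType) (lam : L22) (m n : nat) :
  lam <> L0 -> lam = mkL m n ->
  @homotopy_equivalent R _ _ (@frobenius_complex22 R lam) (@unit_sphere R (m + n).-1).
Proof.
move=> _ ->.
have htriv : forall (X : topologicalType) (A : set X) (h : X -> X),
    (forall x, A x -> h x = x) -> @homotopic_in R X A h idfun.
  move=> X A h hh; exists (fun p => p.2); split.
  - apply: continuous_subspaceT => p; exact: cvg_snd.
  - by move=> _ [[s x] [_ Ax] <-].
  - by move=> x Ax; rewrite hh.
exists (@Fm R m n), (@Gm R m n); split.
- apply: continuous_in_subspaceT => t /set_mem tA.
  apply: F_cont; rewrite gt_eqF // ssq_gt0 // l1_uvec // oner_neq0.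
- by move=> _ [t tA <-]; exact: F_in.
- apply: continuous_in_subspaceT => y /set_mem hy.
  apply: G_cont; rewrite gt_eqF // l1_gt0 //.
  by move: hy; rewrite /unit_sphere /= => hy; rewrite /ssq hy oner_neq0.
- by move=> _ [y hy <-]; exact: G_in.
- split; apply: htriv => x hx /=; [exact: GF | exact: FG].
Qed.
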